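(* Suppose an sAEDS has $M_s:=N/N_s$ an integer for every $s\in\mathcal S$, satisfies $|\mathcal F^+_x|=M_s$ for every $x\in\mathcal X_s$ and every $s$, and, for a stationary distribution $Q$ of its state chain, uses for each $x\in\mathcal X_s$ a phased-in code on $\mathcal F^+_x$ with $M_s$ codewords matched to $Q$ restricted to $\mathcal F^+_x$ (i.e. $\hat x\mapsto E_{\hat x}(s)$ on $\mathcal F^+_x$ is this code). Then its average code length satisfies $$L\le H(p)+D(p\|q)+\sigma,\qquad \sigma=\lg\lg e+1-\lg e\approx0.08607.$$
   Context: Let $\mathcal S$ be a finite alphabet with $|\mathcal S|\ge 2$ and $p=\{p(s)\}$ a probability distribution with $p(s)>0$ for all $s$ (i.i.d. source). $\mathcal B=\{0,1\}^*$ (including the empty word), $l(\beta)$ the word length, $\lg=\log_2$. An AEDS with finite state set $\mathcal X$, $|\mathcal X|=N$, consists of maps $E_{\hat x}:\mathcal S\to\mathcal B$ and $F^-_{\hat x}:\mathcal S\to\mathcal X$ ($\hat x\in\mathcal X$) such that for every $x\in\mathcal X$ the words $E_{\hat x}(s)$ over all pairs $(\hat x,s)$ with $F^-_{\hat x}(s)=x$ are pairwise distinct and form a prefix-free set. The state chain is the Markov chain on $\mathcal X$ moving from $\hat x$ to $F^-_{\hat x}(s)$ with probability $p(s)$; for a stationary distribution $Q$ the average code length is $L=\sum_{\hat x}\sum_s p(s)Q(\hat x)l(E_{\hat x}(s))$. A state-divided AEDS (sAEDS) is an AEDS for which the sets $\mathcal X_s=\{F^-_{\hat x}(s):\hat x\in\mathcal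 X\}$ are pairwise disjoint with union $\mathcal X$; $N_s=|\mathcal X_s|$, $q(s)=N_s/N$. For $x\in\mathcal X_s$, $\mathcal F^+_x=\{\hat x: F^-_{\hat x}(s)=x\}$; for each $s$ these sets partition $\mathcal X$. An sAEDS is thus specified by the partitions and, for each $x\in\mathcal X_s$, an injective prefix-free code $\hat x\mapsto E_{\hat x}(s)$ on $\mathcal F^+_x$; the state chain (hence $Q$) depends only on $p$ and the partitions. Phased-in code: for an integer $M\ge1$ and $k=\lceil\lg M\rceil$, a prefix-free code on an $M$-element set with $2^k-M$ codewords of length $k-1$ and $2M-2^k$ codewords of length $k$ (for $M=1$, the single empty word). It is matched to a distribution on that set if the length-$(k-1)$ codewords go to $2^k-M$ elements of largest probability. $H(p)=-\sum_s p(s)\lg p(s)$, $D(p\|q)=\sum_s p(s)\lg(p(s)/q(s))$. *)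

(* Defs.v *)
From HB Require Import structures.
From mathcomp Require Import all_boot all_order all_algebra.
From mathcomp Require Import all_classical all_reals all_analysis.
Set Implicit Arguments. Unset Strict Implicit. Unset Printing Implicit Defensive.
Import Order.TTheory GRing.Theory Num.Theory.
Local Open Scope ring_scope.

Section AEDSDefs.
Variables (R : realType) (S X : finType).

Definition lg (x : R) : R := ln x / ln 2.

Definition entropy (p : S -> R) : R := - \sum_s p s * lg (p s).
Definition divergence (p q : S -> R) : R := \sum_s p s * lg (p s / q s).
Definition sigma_const : R := lg (lg (expR 1)) + 1 - lg (expR 1).

(* AEDS condition: for every state x, the words E_xh(s) over all pairs
   (xh,s) with F^-_xh(s) = x are pairwise distinct and prefix-free, i.e.
   no word of a distinct pair is a prefix of another (which also forces
   distinctness). *)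
Definition is_AEDS (E : X -> S -> seq bool) (F : X -> S -> X) : Prop :=
  forall (x : X) (a b : X * S), a != b ->
    F a.1 a.2 = x -> F b.1 b.2 = x -> ~~ prefix (E a.1 a.2) (E b.1 b.2).

Definition Xs (F : X -> S -> X) (s : S) : {set X} := [set F xh s | xh in X].
Definition Ns (F : X -> S -> X) (s : S) : nat := #|Xs F s|.
Definition Fplus (F : X -> S -> X) (s : S) (x : X) : {set X} :=
  [set xh | F xh s == x].
Definition qdist (F : X -> S -> X) (s : S) : R := (Ns F s)%:R / (#|X|)%:R.

Definition is_sAEDS (F : X -> S -> X) : Prop :=
  (forall s s', s != s' -> [disjoint Xs F s & Xs F s']) /\
  \bigcup_(s : S) Xs F s = [set: X].

(* Q is a stationary distribution of the state chain xh -> F xh s w.p. p s *)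
Definition is_stationary (p : S -> R) (F : X -> S -> X) (Q : X -> R) : Prop :=
  (forall x, 0 <= Q x) /\ \sum_x Q x = 1 /\
  forall x, Q x = \sum_xh \sum_(s | F xh s == x) Q xh * p s.

(* c : A -> B is a phased-in code on the M-element set A (M = #|A|, k = ceil lg M):
   prefix-free and injective, every codeword has length k-1 or k, exactly
   2M - 2^k codewords have length k (hence 2^k - M have length k-1);
   matched to Q: every element with a short codeword has Q-probability at
   least that of every element with a length-k codeword. *)
Definition phased_in_matched (Q : X -> R) (A : {set X}) (c : X -> seq bool) : Prop :=
  let M := #|A| in let k := up_log 2 M in
  (forall x y, x \in A -> y \in A -> x != y -> ~~ prefix (c x) (c y)) /\
  (forall x, x \in A -> size (c x) = k \/ size (c x) = k.-1) /\
  #|[set x in A | size (c x) == k]| = (2 * M - 2 ^ k)%N /\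
  (forall x y, x \in A -> y \in A -> (size (c x) < k)%N -> size (c y) = k ->
     Q y <= Q x).

Definition avg_len (p : S -> R) (Q : X -> R) (E : X -> S -> seq bool) : R :=
  \sum_xh \sum_s p s * Q xh * (size (E xh s))%:R.

End AEDSDefs.

(* Main.v *)
Require Import Defs.
From HB Require Import structures.
From mathcomp Require Import all_boot all_order all_algebra.
From mathcomp Require Import all_classical all_reals all_analysis.
From mathcomp Require Import lra zify.
Import Order.TTheory GRing.Theory Num.Theory.
Local Open Scope ring_scope.

Lemma ln_le_sub1 (R : realType) (y : R) : 0 < y -> ln y <= y - 1.
Proof.
move=> y0; have := expR_ge1Dx (ln y); rewrite lnK ?posrE // => h; lra.
Qed.

Lemma key_ineq (R : realType) (x : R) : 0 < x -> 1 - x + lg x <= sigma_const R.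
Proof.
move=> x0; rewrite /sigma_const /lg expRK div1r.
have l2p : 0 < ln (2:R) by apply: ln_gt0; lra.
rewrite lnV ?posrE //.
have H : ln x + ln (ln (2:R)) <= x * ln 2 - 1.
  rewrite -lnM ?posrE //; apply: ln_le_sub1; exact: mulr_gt0.
set t := (ln (2:R))^-1.
have tp : 0 < t by rewrite invr_gt0.
have H2 : (ln x + ln (ln (2:R))) * t <= (x * ln 2 - 1) * t by rewrite ler_wpM2r // ltW.
have E : (x * ln 2 - 1) * t = x - t by rewrite /t mulrBl -mulrA mulfV ?mulr1 ?mul1r // gt_eqF.
rewrite E mulrDl in H2.
rewrite !mulNr; lra.
Qed.

Lemma pow2_bounds (M : nat) : (0 < M)%N ->
  (M <= 2 ^ up_log 2 M)%N /\ (2 ^ up_log 2 M <= 2 * M)%N.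
Proof.
move=> M0; split; first exact: up_logP.
case: (leqP M 1) => hM.
  have -> : up_log 2 M = 0%N by apply/eqP; rewrite up_log_eq0 hM orbT.
  by rewrite expn0 muln_gt0.
have h := up_log_gtn (ltnSn 1) hM.
have k0 : (0 < up_log 2 M)%N by rewrite up_log_gt0 hM.
rewrite -(prednK k0) expnS leq_mul2l /=; exact: ltnW.
Qed.

Lemma lg_pow2 (R : realType) (k : nat) : lg ((2 ^ k)%:R : R) = k%:R.
Proof.
have l2p : 0 < ln (2:R) by apply: ln_gt0; lra.
rewrite /lg natrX lnXn ?ltr0n // -[ln 2 *+ k]mulr_natr mulrAC mulfV ?mul1r //.
by rewrite gt_eqF.
Qed.

Lemma block_bound (R : realType) (X : finType) (Q : X -> R) (A : {set X})
  (c : X -> seq bool) :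
  (forall x, 0 <= Q x) -> (0 < #|A|)%N -> phased_in_matched Q A c ->
  \sum_(x in A) Q x * (size (c x))%:R <=
    (\sum_(x in A) Q x) * (lg (#|A|%:R) + sigma_const R).
Proof.
move=> Q0 A0 [_ [hlen [hcard hmatch]]].
set M := #|A| in A0 hlen hcard hmatch *.
set k := up_log 2 M in hlen hcard hmatch *.
have [hMk hkM] := pow2_bounds M A0.
set B := [set x | size (c x) == k].
have cL : #|A :&: B| = (2 * M - 2 ^ k)%N.
  rewrite -hcard; apply: eq_card => x; rewrite !inE andbC //.
have cS : #|A :\: B| = (2 ^ k - M)%N.
  have := cardsID B A; rewrite cL => h; have hM : #|A| = M by []. rewrite hM in h. move: hMk hkM h; move: (2 ^ k)%N (#|A :\: B|) => P C; clearbody M; lia.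
have shortP : forall x, x \in A :\: B -> (size (c x) < k)%N /\ size (c x) = k.-1.
  move=> x; rewrite !inE => /andP [hn hA].
  case: (hlen x hA) => h; first by rewrite h eqxx in hn.
  split=> //; rewrite h; move: hn; rewrite h; case: (k) => //= n _.
set WL := \sum_(x in A :&: B) Q x.
set WS := \sum_(x in A :\: B) Q x.
have hW : \sum_(x in A) Q x = WL + WS by rewrite (big_setID B).
have hS : \sum_(x in A) Q x * (size (c x))%:R = k%:R * WL + (k%:R - 1) * WS.
  rewrite (big_setID B) /WL /WS !mulr_sumr; congr (_ + _).
    apply: eq_bigr => x /setIP [_]; rewrite inE => /eqP ->; by rewrite mulrC.
  apply: eq_bigr => x hx; have [h1 h2] := shortP x hx.
  rewrite h2 mulrC; congr (_ * _).
  have k0 : (0 < k)%N by lia.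
  by rewrite -(prednK k0) /= -natr1 addrK.
have WL0 : 0 <= WL by apply: sumr_ge0.
have WS0 : 0 <= WS by apply: sumr_ge0.
have pair : (2 ^ k - M)%:R * WL <= (2 * M - 2 ^ k)%:R * WS.
  have e1 : \sum_(y in A :\: B) \sum_(z in A :&: B) Q z = (2 ^ k - M)%:R * WL.
    by rewrite sumr_const cS mulr_natl.
  have e2 : \sum_(y in A :\: B) \sum_(z in A :&: B) Q y = (2 * M - 2 ^ k)%:R * WS.
    under eq_bigr do rewrite sumr_const cL.
    by rewrite sumrMnl mulr_natl.
  rewrite -e1 -e2; apply: ler_sum => y hy; apply: ler_sum => z hz.
  apply: hmatch.
  - by move: hy; rewrite !inE => /andP [].
  - by move: hz; rewrite !inE => /andP [].
  - by have [] := shortP y hy.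
  - by move: hz => /setIP [_]; rewrite inE => /eqP.
have Mp : 0 < (M%:R : R) by rewrite ltr0n.
set P := ((2 ^ k)%:R : R).
have eS : (2 ^ k - M)%:R = P - M%:R :> R by rewrite natrB.
have eL : (2 * M - 2 ^ k)%:R = 2 * M%:R - P :> R by rewrite natrB // natrM.
rewrite eS eL in pair.
have key : M%:R * WS >= (P - M%:R) * (WL + WS) by nra.
set x := P / M%:R.
have xp : 0 < x by rewrite divr_gt0 // /P ltr0n expn_gt0.
have kx : 1 - x + lg x <= sigma_const R by exact: key_ineq.
have lgx : lg x = k%:R - lg M%:R.
  rewrite /x /lg ln_div ?posrE ?ltr0n ?expn_gt0 // mulrBl.
  by have := lg_pow2 R k; rewrite /lg => ->.
rewrite lgx in kx.
have hWS : (x - 1) * (WL + WS) <= WS.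
  have -> : x - 1 = (P - M%:R) / M%:R by rewrite /x mulrBl mulfV // gt_eqF.
  rewrite mulrAC ler_pdivrMr //; nra.
rewrite hS hW.
have : (WL + WS) * (k%:R + 1 - x) <= (WL + WS) * (lg M%:R + sigma_const R).
  apply: ler_wpM2l; [lra | lra].
nra.
Qed.

Theorem theorem4 (R : realType) (S X : finType) (p : S -> R)
  (E : X -> S -> seq bool) (F : X -> S -> X) (Q : X -> R) :
  (2 <= #|S|)%N ->
  (forall s, 0 < p s) -> \sum_s p s = 1 ->
  is_AEDS E F -> is_sAEDS F -> is_stationary p F Q ->
  (forall s, (Ns F s %| #|X|)%N) ->
  (forall s x, x \in Xs F s -> #|Fplus F s x| = (#|X| %/ Ns F s)%N) ->
  (forall s x, x \in Xs F s -> phased_in_matched Q (Fplus F s x) (fun xh => E xh s)) ->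
  avg_len p Q E <= entropy p + divergence p (@qdist R S X F) + sigma_const R.
Proof.
move=> _ pp p1 _ _ [Q0 [Q1 _]] hdiv hcard hphase.
have [x0 _] : exists x0 : X, true.
  case: (pickP (fun _ : X => true)) => [x0 _|h]; first by exists x0.
  by move: Q1; rewrite big_pred0 // => /eqP; rewrite eq_sym oner_eq0.
set N := #|X|.
have Np : (0 < N)%N by apply/card_gt0P; exists x0.
have Nsp : forall s, (0 < Ns F s)%N.
  move=> s; apply/card_gt0P; exists (F x0 s); exact: imset_f.
set Ms := fun s => (N %/ Ns F s)%N.
have MsN : forall s, (Ms s * Ns F s)%N = N by move=> s; rewrite /Ms divnK.
have Msp : forall s, (0 < Ms s)%N.
  move=> s; have := MsN s; case: (Ms s) => //= h; move: Np; by rewrite -h.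
have per_s : forall s,
    \sum_xh Q xh * (size (E xh s))%:R <= lg (Ms s)%:R + sigma_const R.
  move=> s.
  rewrite (partition_big (fun xh => F xh s) xpredT) //=.
  apply: (@le_trans _ _ (\sum_x (\sum_(xh in Fplus F s x) Q xh) *
                                 (lg (Ms s)%:R + sigma_const R))).
    apply: ler_sum => x _.
    have -> : \sum_(xh | F xh s == x) Q xh * (size (E xh s))%:R =
              \sum_(xh in Fplus F s x) Q xh * (size (E xh s))%:R.
      by apply: eq_bigl => xh; rewrite /Fplus inE.
    case: (boolP (x \in Xs F s)) => hx.
      have hc := hcard s x hx.
      have := @block_bound R X Q (Fplus F s x) (fun xh => E xh s) Q0.
      rewrite hc; apply; first exact: Msp.
      exact: hphase.
    rewrite !big1 ?mul0r // => xh; rewrite /Fplus inE => /eqP hxh;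
      case/negP: hx; rewrite -hxh; exact: imset_f.
  rewrite -mulr_suml.
  have -> : \sum_x \sum_(xh in Fplus F s x) Q xh = 1.
    rewrite -Q1 [RHS](partition_big (fun xh => F xh s) xpredT) //=.
    by apply: eq_bigr => x _; apply: eq_bigl => xh; rewrite /Fplus inE.
  by rewrite mul1r.
have avg : avg_len p Q E = \sum_s p s * \sum_xh Q xh * (size (E xh s))%:R.
  rewrite /avg_len exchange_big; apply: eq_bigr => s _; rewrite mulr_sumr.
  by apply: eq_bigr => xh _; rewrite mulrA.
rewrite avg.
apply: (@le_trans _ _ (\sum_s p s * (lg (Ms s)%:R + sigma_const R))).
  by apply: ler_sum => s _; apply: ler_wpM2l; [exact: ltW | exact: per_s].
have l2p : 0 < ln (2:R) by apply: ln_gt0; lra.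
have -> : entropy p + divergence p (@qdist R S X F) + sigma_const R =
          \sum_s p s * (lg (Ms s)%:R + sigma_const R).
  under eq_bigr do rewrite mulrDr.
  rewrite big_split /= -mulr_suml p1 mul1r.
  congr (_ + _).
  rewrite /entropy /divergence -sumrN -big_split /=; apply: eq_bigr => s _.
  have Nsr : 0 < ((Ns F s)%:R : R) by rewrite ltr0n.
  have Nr : 0 < (N%:R : R) by rewrite ltr0n.
  have hMs : ((Ms s)%:R : R) = N%:R / (Ns F s)%:R.
    by rewrite -(MsN s) natrM mulfK // gt_eqF.
  have e : lg (p s / @qdist R S X F s) = lg (p s) + lg (Ms s)%:R.
    rewrite /lg hMs /qdist -mulrDl; congr (_ / _).
    rewrite ln_div ?posrE ?divr_gt0 // ln_div ?posrE // ln_div ?posrE //.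
    rewrite -/N; lra.
  by rewrite e mulrDr addrA addNr add0r.
by [].
Qed.
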